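(* Assume $a_j>0$ for all $j$ and let $B',B''>0$. There is a constant $C>0$ depending only on $B',B'',\eta$ and the fixed data ($F$, $a$) such that the following holds. Let $M,N\ge1$, $Q(\mathcal V)\in Q_{M,N}$, let $V_m=[b,b+\ell]$ be a maximal interval of $\mathcal V$ with $b\ge1$, and let $J(V_m)=J_1(V_m)\times\cdots\times J_{r+s}(V_m)$ be a choice with $Q(J(V_m))\neq\emptyset$; let $n_j$ be the left endpoint of $J_j(V_m)$ ($n_j=-\infty$ if $J_j(V_m)=[-\infty,b]$, in which case $e^{b-n_j}=\infty$). Let $$D=\{u^+(\mathbf t)\in U^+:|t_j|<B'\min\{\eta,e^{b-n_j}\},\ j=1,\dots,r+s\},\quad E=\{u^+(\mathbf t)\in U^+:|t_j|<B''\eta e^{-\ell a_j},\ j=1,\dots,r+s\}.$$ Then $D$ can be covered by at most $C\exp\!\bigl(\tfrac{h_{\max}(T)}{2}\ell\bigr)$ translates $u^+(\mathbf t_0)E$ of $E$ (with $u^+(\mathbf t_0)\in U^+$).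
   Context: Setup. Let $F$ be an algebraic number field with ring of integers $\mathcal O$, real embeddings $\sigma_1,\dots,\sigma_r$ and complex embeddings $\sigma_{r+1},\dots,\sigma_{r+s}$ (one from each conjugate pair). Let $G=\prod_{j=1}^r\mathrm{SL}_2(\mathbb R)\times\prod_{j=1}^s\mathrm{SL}_2(\mathbb C)$ and $\Gamma=\mathrm{SL}_2(\mathcal O)$, embedded in $G$ via $\gamma\mapsto(\sigma_1(\gamma),\dots,\sigma_{r+s}(\gamma))$ (entrywise); $X=\Gamma\backslash G$. Fix a diagonal element $a=\bigl(\mathrm{diag}(e^{i\theta_j}e^{a_j/2},e^{-i\theta_j}e^{-a_j/2})\bigr)_{j=1}^{r+s}\in G$ with $a_j\in\mathbb R$, $\theta_j\in[0,2\pi]$, $\theta_1=\dots=\theta_r=0$, and let $T:X\to X$, $T(x)=xa$. Put $h_{\max}(T)=\sum_{j\le r}|a_j|+2\sum_{j>r}|a_j|$. Set $\delta_j=1$ for $j\le r$, $\delta_j=2$ for $j>r$. Vectors in $(\mathbb R^2)^r\times(\mathbb C^2)^s$ are written $v=(v_1',v_1'')\times\cdots\times(v_{r+s}',v_{r+s}'')$; $\mathcal O$ acts by $\lambda\cdot v=(\sigma_j(\lambda)v_j',\sigma_j(\lambda)v_j'')_j$, $G$ acts on the right componentwise. A point $x=\Gamma g$ is identified with the $\mathcal O$-module $\Lambda_x$ generated by the two rows of $g$; $\Lambda_{T(x)}=\Lambda_xa$. Define $|(v_j',v_j'')|=\max\{|v_j'|,|v_j''|\}$, $\|v\|=\prod_j|(v_j',v_j'')|^{\delta_j}$,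 $\mathrm{ht}(x)=\max\{\|v\|^{-1}:v\in\Lambda_x\setminus\{0\}\}$, $X_{<M}=\{\mathrm{ht}<M\}$, $X_{\ge M}=X\setminus X_{<M}$. For $M,N\ge1$, $Q_{M,N}=\bigvee_{n=0}^{N-1}T^{-n}\{X_{<M},X_{\ge M}\}$; its elements are the sets $Q(\mathcal V)=\{x\in X:\forall n\in[0,N-1],\ T^n(x)\in X_{\ge M}\iff n\in\mathcal V\}$ for $\mathcal V\subset\{0,\dots,N-1\}$. For a maximal interval $V_m=[b_m,b_m+\ell_m]$ of consecutive integers in $\mathcal V$ and $j\in\{1,\dots,r+s\}$, $\mathcal I_j(V_m)$ consists of the intervals $I_{0,j}=[-\infty,b_m]$, $I_{n,j}=(b_m+(n-1)a_j,\,b_m+na_j]$ for $1\le n\le\ell_m$, and $I_{\ell_m+1,j}=(b_m+\ell_ma_j,\infty]$. For a choice $J(V_m)=J_1(V_m)\times\cdots\times J_{r+s}(V_m)$ with $J_j(V_m)\in\mathcal I_j(V_m)$, $Q(J(V_m))$ is the set of $x\in Q(\mathcal V)$ for which there exists $v\in\Lambda_{T^{b_m-1}(x)}$ with $\|va^n\|\le1/M$ for all $n\in[1,\ell_m+1]$ and with $|v_j''|=|v_j'|e^{s_j}$ for some $s_j\in J_j(V_m)-b_m$, for every $j$ (allowing $s_j=\pm\infty$). $U^+=\{g:a^{-n}ga^n\to1\text{ as }n\to-\infty\}$; when all $a_j>0$, $U^+=\{u^+(\mathbf t):\mathbf t\in\mathbb R^r\times\mathbb C^s\}$ with $u^+(\mathbf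 t)=\Bigl(\begin{pmatrix}1&0\\t_j&1\end{pmatrix}\Bigr)_{j=1}^{r+s}$, and $u^+(\mathbf t)u^+(\mathbf t')=u^+(\mathbf t+\mathbf t')$. $\eta>0$ is a fixed small constant. *)

(* Defs.v *)
From Stdlib Require Import Reals.
From HB Require Import structures.
From mathcomp Require Import all_boot all_order all_algebra all_field.

Set Implicit Arguments.
Unset Strict Implicit.
Unset Printing Implicit Defensive.

Local Open Scope R_scope.

Record Cx := mkCx { cre : R; cim : R }.
Definition C0 : Cx := mkCx 0 0.
Definition C1 : Cx := mkCx 1 0.
Definition Cadd (z w : Cx) : Cx := mkCx (cre z + cre w) (cim z + cim w).
Definition Cmul (z w : Cx) : Cx :=
  mkCx (cre z * cre w - cim z * cim w) (cre z * cim w + cim z * cre w).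
Definition Csub (z w : Cx) : Cx := mkCx (cre z - cre w) (cim z - cim w).
Definition Cconj (z : Cx) : Cx := mkCx (cre z) (- cim z).
Definition Cnorm (z : Cx) : R := sqrt (cre z ^ 2 + cim z ^ 2).

Definition ring_hom_C (L : fieldExtType rat) (f : L -> Cx) : Prop :=
  (forall x y : L, f (x + y)%R = Cadd (f x) (f y)) /\
  (forall x y : L, f (x * y)%R = Cmul (f x) (f y)) /\
  f (1%R : L) = C1.

Definition alg_int (L : fieldExtType rat) (x : L) : Prop :=
  exists p : {poly int},
    p \is monic /\ root (map_poly (fun z : int => (z%:~R : L)%R) p) x.

(* sigma 0..r-1 are the real embeddings, sigma r..r+s-1 are the complex
   embeddings, one from each conjugate pair; these are ALL embeddings
   L -> C up to complex conjugation, pairwise distinct. *)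
Definition embedding_family (L : fieldExtType rat) (r s : nat)
    (sigma : nat -> L -> Cx) : Prop :=
  (forall j, (j < r + s)%N -> ring_hom_C (sigma j)) /\
  (forall j, (j < r)%N -> forall x, cim (sigma j x) = 0) /\
  (forall j, (r <= j)%N -> (j < r + s)%N -> exists x, cim (sigma j x) <> 0) /\
  (forall i j, (i < r + s)%N -> (j < r + s)%N -> i <> j ->
      (exists x, sigma i x <> sigma j x) /\
      (exists x, sigma i x <> Cconj (sigma j x))) /\
  (forall tau : L -> Cx, ring_hom_C tau ->
      exists j, (j < r + s)%N /\
        ((forall x, tau x = sigma j x) \/ (forall x, tau x = Cconj (sigma j x)))).

Record M2 := mkM2 { m11 : Cx; m12 : Cx; m21 : Cx; m22 : Cx }.
Definition M2mul (A B : M2) : M2 :=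
  mkM2 (Cadd (Cmul (m11 A) (m11 B)) (Cmul (m12 A) (m21 B)))
       (Cadd (Cmul (m11 A) (m12 B)) (Cmul (m12 A) (m22 B)))
       (Cadd (Cmul (m21 A) (m11 B)) (Cmul (m22 A) (m21 B)))
       (Cadd (Cmul (m21 A) (m12 B)) (Cmul (m22 A) (m22 B))).
Definition M2det (A : M2) : Cx := Csub (Cmul (m11 A) (m22 A)) (Cmul (m12 A) (m21 A)).

(* elements of G: components indexed by j = 0 .. r+s-1 (others are ignored) *)
Definition Gelt := nat -> M2.
Definition in_G (r s : nat) (g : Gelt) : Prop :=
  forall j, (j < r + s)%N ->
    M2det (g j) = C1 /\
    ((j < r)%N -> cim (m11 (g j)) = 0 /\ cim (m12 (g j)) = 0 /\
                  cim (m21 (g j)) = 0 /\ cim (m22 (g j)) = 0).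
Definition Geq (r s : nat) (g h : Gelt) : Prop := forall j, (j < r + s)%N -> g j = h j.
Definition gmul (g h : Gelt) : Gelt := fun j => M2mul (g j) (h j).

Definition adiag (aa th : nat -> R) : Gelt := fun j =>
  mkM2 (mkCx (cos (th j) * exp (aa j / 2)) (sin (th j) * exp (aa j / 2))) C0
       C0 (mkCx (cos (th j) * exp (- aa j / 2)) (- sin (th j) * exp (- aa j / 2))).

(* T^n (Gamma g) = Gamma (g a^n) *)
Definition Tpow (aa th : nat -> R) (n : nat) (g : Gelt) : Gelt :=
  Nat.iter n (fun g' => gmul g' (adiag aa th)) g.

Definition Vec := nat -> (Cx * Cx).
Definition vec_act (p : Cx * Cx) (A : M2) : Cx * Cx :=
  (Cadd (Cmul p.1 (m11 A)) (Cmul p.2 (m21 A)),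
   Cadd (Cmul p.1 (m12 A)) (Cmul p.2 (m22 A))).
Definition vact (v : Vec) (g : Gelt) : Vec := fun j => vec_act (v j) (g j).
Definition vapow (aa th : nat -> R) (n : nat) (v : Vec) : Vec :=
  Nat.iter n (fun w => vact w (adiag aa th)) v.

Definition compnorm (p : Cx * Cx) : R := Rmax (Cnorm p.1) (Cnorm p.2).
Definition delta (r j : nat) : nat := if (j < r)%N then 1%N else 2%N.
Fixpoint prodR (n : nat) (f : nat -> R) : R :=
  match n with O => 1 | S m => prodR m f * f m end.
Fixpoint sumR (n : nat) (f : nat -> R) : R :=
  match n with O => 0 | S m => sumR m f + f m end.
Definition vnorm (r s : nat) (v : Vec) : R :=
  prodR (r + s) (fun j => compnorm (v j) ^ delta r j).
Definition nonzero_vec (r s : nat) (v : Vec) : Prop :=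
  exists j, (j < r + s)%N /\ v j <> (C0, C0).

(* Lambda_x for x = Gamma g : the O-module generated by the rows of g *)
Definition in_lattice (L : fieldExtType rat) (sigma : nat -> L -> Cx) (r s : nat)
    (g : Gelt) (v : Vec) : Prop :=
  exists alpha beta : L, alg_int alpha /\ alg_int beta /\
    forall j, (j < r + s)%N ->
      v j = (Cadd (Cmul (sigma j alpha) (m11 (g j))) (Cmul (sigma j beta) (m21 (g j))),
             Cadd (Cmul (sigma j alpha) (m12 (g j))) (Cmul (sigma j beta) (m22 (g j)))).

(* ht(Gamma g) < M, where ht = max { ||v||^-1 : v in Lambda \ 0 }
   (stated as: every nonzero lattice vector has ||v||^-1 < M, i.e. 1 < M ||v||) *)
Definition ht_lt (L : fieldExtType rat) (sigma : nat -> L -> Cx) (r s : nat)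
    (g : Gelt) (M : R) : Prop :=
  forall v, in_lattice sigma r s g v -> nonzero_vec r s v -> 1 < M * vnorm r s v.

Definition in_QV (L : fieldExtType rat) (sigma : nat -> L -> Cx) (r s : nat)
    (aa th : nat -> R) (M : R) (N : nat) (V : nat -> Prop) (g : Gelt) : Prop :=
  forall n, (n < N)%N -> (~ ht_lt sigma r s (Tpow aa th n g) M <-> V n).

Definition max_interval (V : nat -> Prop) (b l : nat) : Prop :=
  (forall n, (b <= n)%N -> (n <= b + l)%N -> V n) /\
  (b = 0%N \/ ~ V (b - 1)%N) /\ ~ V (b + l + 1)%N.

(* extended reals for s_j = +-infinity *)
Inductive ER := ERfin (x : R) | ERpinf | ERninf.

(* s in I_{k,j} - b, where I_{0,j} = [-inf, b], I_{k,j} = (b+(k-1)a_j, b+k a_j]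
   for 1 <= k <= l, and I_{l+1,j} = (b + l a_j, +inf] *)
Definition in_Ishift (l k : nat) (aj : R) (s : ER) : Prop :=
  if k == 0%N then (match s with ERninf => True | ERfin x => x <= 0 | ERpinf => False end)
  else if (k <= l)%N then
    (match s with ERfin x => INR (k - 1) * aj < x /\ x <= INR k * aj | _ => False end)
  else (match s with ERpinf => True | ERfin x => INR l * aj < x | ERninf => False end).

(* |v''| = |v'| e^s  (with e^{+inf} = inf, e^{-inf} = 0) *)
Definition ratio_rel (p : Cx * Cx) (s : ER) : Prop :=
  match s with
  | ERfin x => Cnorm p.2 = Cnorm p.1 * exp x
  | ERpinf => Cnorm p.1 = 0
  | ERninf => Cnorm p.2 = 0
  end.

(* Gamma g in Q(J(V_m)), where J_j(V_m) = I_{k j, j}, V_m = [b, b+l] *)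
Definition in_QJ (L : fieldExtType rat) (sigma : nat -> L -> Cx) (r s : nat)
    (aa th : nat -> R) (M : R) (N : nat) (V : nat -> Prop) (b l : nat)
    (k : nat -> nat) (g : Gelt) : Prop :=
  in_QV sigma r s aa th M N V g /\
  exists v : Vec,
    in_lattice sigma r s (Tpow aa th (b - 1) g) v /\ nonzero_vec r s v /\
    (forall n, (1 <= n)%N -> (n <= l + 1)%N -> vnorm r s (vapow aa th n v) <= / M) /\
    (forall j, (j < r + s)%N -> exists sj, in_Ishift l (k j) (aa j) sj /\ ratio_rel (v j) sj).

Definition uplus (t : nat -> Cx) : Gelt := fun j => mkM2 C1 C0 (t j) C1.
Definition real_par (r : nat) (t : nat -> Cx) : Prop := forall j, (j < r)%N -> cim (t j) = 0.

(* min{eta, e^{b - n_j}} with n_j the left endpoint of J_j(V_m) *)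
Definition Dbound (eta : R) (aa : nat -> R) (k : nat -> nat) (j : nat) : R :=
  if k j == 0%N then eta else Rmin eta (exp (- (INR (k j - 1) * aa j))).

Definition in_D (r s : nat) (B' eta : R) (aa : nat -> R) (k : nat -> nat) (g : Gelt) : Prop :=
  exists t, real_par r t /\
    (forall j, (j < r + s)%N -> Cnorm (t j) < B' * Dbound eta aa k j) /\ Geq r s g (uplus t).

Definition in_E (r s : nat) (B'' eta : R) (aa : nat -> R) (l : nat) (g : Gelt) : Prop :=
  exists t, real_par r t /\
    (forall j, (j < r + s)%N -> Cnorm (t j) < B'' * eta * exp (- (INR l * aa j))) /\
    Geq r s g (uplus t).

Definition hmax (r s : nat) (aa : nat -> R) : R :=
  sumR (r + s) (fun j => INR (delta r j) * Rabs (aa j)).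

(* Main.v *)
Require Import Defs.
From Stdlib Require Import Reals Lra Lia Classical ZArith.
From HB Require Import structures.
From mathcomp Require Import all_boot all_order all_algebra all_field.
From mathcomp Require Import zify.

Local Open Scope R_scope.

Lemma prodR_ext n f g : (forall j, (j < n)%N -> f j = g j) -> prodR n f = prodR n g.
Proof.
elim: n => [|n IH] H //=.
rewrite IH; last by move=> j hj; apply: H; lia.
by rewrite H //; lia.
Qed.

Lemma sumR_ext n f g : (forall j, (j < n)%N -> f j = g j) -> sumR n f = sumR n g.
Proof.
elim: n => [|n IH] H //=.
rewrite IH; last by move=> j hj; apply: H; lia.
by rewrite H //; lia.
Qed.

Lemma prodR_mul n f g : prodR n (fun j => f j * g j) = prodR n f * prodR n g.
Proof. elim: n => [|n IH] /=; [ring | rewrite IH; ring]. Qed.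

Lemma prodR_ge0 n f : (forall j, (j < n)%N -> 0 <= f j) -> 0 <= prodR n f.
Proof.
elim: n => [|n IH] H /=; first lra.
apply: Rmult_le_pos; [apply: IH => j hj; apply: H; lia | apply: H; lia].
Qed.

Lemma prodR_gt0 n f : (forall j, (j < n)%N -> 0 < f j) -> 0 < prodR n f.
Proof.
elim: n => [|n IH] H /=; first lra.
apply: Rmult_lt_0_compat; [apply: IH => j hj; apply: H; lia | apply: H; lia].
Qed.

Lemma prodR_le n f g : (forall j, (j < n)%N -> 0 <= f j <= g j) -> prodR n f <= prodR n g.
Proof.
elim: n => [|n IH] H /=; first lra.
have H1 : prodR n f <= prodR n g by apply: IH => j hj; apply: H; lia.
have H2 : 0 <= prodR n f by apply: prodR_ge0 => j hj; case: (H j) => //; lia.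
have H3 := H n (ltnSn n).
apply: Rmult_le_compat; lra.
Qed.

Lemma prodR_exp n f : prodR n (fun j => exp (f j)) = exp (sumR n f).
Proof. elim: n => [|n IH] /=; [by rewrite exp_0 | by rewrite IH exp_plus]. Qed.

Lemma sumR_scal n f c : sumR n f * c = sumR n (fun j => f j * c).
Proof. elim: n => [|n IH] /=; [ring | rewrite -IH; ring]. Qed.

Lemma exp_pow x m : exp x ^ m = exp (INR m * x).
Proof.
elim: m => [|m IH]; first by rewrite /= Rmult_0_l exp_0.
by rewrite -tech_pow_Rmult IH S_INR -exp_plus; f_equal; ring.
Qed.

Lemma Cnorm_mul z w : Cnorm (Cmul z w) = Cnorm z * Cnorm w.
Proof.
case: z => a b; case: w => c d; rewrite /Cnorm /Cmul /=.
rewrite -sqrt_mult; try nra.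
f_equal; ring.
Qed.

Lemma Cnorm_sq a b e : 0 <= e -> a ^ 2 + b ^ 2 = e ^ 2 -> Cnorm (mkCx a b) = e.
Proof. move=> he H; rewrite /Cnorm /= H; by apply: sqrt_pow2. Qed.

Lemma Cnorm_ge0 z : 0 <= Cnorm z.
Proof. apply: sqrt_pos. Qed.

Lemma vapow_norm aa th n v j :
  Cnorm ((vapow aa th n v j).1) = Cnorm (v j).1 * exp (INR n * aa j / 2) /\
  Cnorm ((vapow aa th n v j).2) = Cnorm (v j).2 * exp (- (INR n * aa j) / 2).
Proof.
elim: n => [|n [IH1 IH2]].
  by rewrite /= !Rmult_0_l Ropp_0 /Rdiv Rmult_0_l exp_0 !Rmult_1_r.
have E : vapow aa th n.+1 v j = vec_act (vapow aa th n v j) (adiag aa th j) by [].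
rewrite E S_INR; case: (vapow aa th n v j) IH1 IH2 => [x y] /= IH1 IH2.
have hc := sin2_cos2 (th j).
split.
- have -> : Cadd (Cmul x (mkCx (cos (th j) * exp (aa j / 2)) (sin (th j) * exp (aa j / 2))))
     (Cmul y C0) = Cmul x (mkCx (cos (th j) * exp (aa j / 2)) (sin (th j) * exp (aa j / 2))).
    by case: x {IH1} => ? ?; rewrite /Cadd /Cmul /C0 /=; f_equal; ring.
  rewrite Cnorm_mul IH1 (@Cnorm_sq _ _ (exp (aa j / 2))); last first.
    rewrite /Rsqr in hc. nra.
    by apply: Rlt_le; apply: exp_pos.
  rewrite Rmult_assoc -exp_plus; do 2 f_equal. field.
- have -> : Cadd (Cmul x C0) (Cmul y (mkCx (cos (th j) * exp (- aa j / 2)) (- sin (th j) * exp (- aa j / 2))))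
      = Cmul y (mkCx (cos (th j) * exp (- aa j / 2)) (- sin (th j) * exp (- aa j / 2))).
    by case: y {IH2} => ? ?; rewrite /Cadd /Cmul /C0 /=; f_equal; ring.
  rewrite Cnorm_mul IH2 (@Cnorm_sq _ _ (exp (- aa j / 2))); last first.
    rewrite /Rsqr in hc. nra.
    by apply: Rlt_le; apply: exp_pos.
  rewrite Rmult_assoc -exp_plus; do 2 f_equal. field.
Qed.

Lemma floor_nat (z : R) n : 0 <= z -> z < INR n ->
  exists i, (i < n)%N /\ INR i <= z < INR i + 1.
Proof.
elim: n => [|n IH] hz hn; first by simpl in hn; lra.
case: (Rlt_le_dec z (INR n)) => h.
  case: (IH hz h) => i [hi H]; exists i; split => //; lia.
exists n; split => //; rewrite S_INR in hn; lra.
Qed.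

Lemma nat_up (y : R) : 0 <= y -> exists n : nat, y < INR n /\ INR n <= y + 1.
Proof.
move=> hy; have [h1 h2] := archimed y.
have hz : Z.le 0 (up y) by apply: le_IZR; lra.
exists (Z.to_nat (up y)); rewrite INR_IZR_INZ Z2Nat.id //; lra.
Qed.

Lemma axis_ex (R0 h : R) : 0 < h -> 0 <= R0 -> exists n : nat,
  INR n <= 2 * R0 / h + 1 /\ forall x, -R0 < x < R0 ->
  exists i, (i < n)%N /\ -R0 + INR i * h <= x < -R0 + INR i * h + h.
Proof.
move=> hh hR.
have hy : 0 <= 2 * R0 / h by apply: Rmult_le_pos; [lra | apply: Rlt_le; apply: Rinv_0_lt_compat].
case: (@nat_up _ hy) => n [hn1 hn2]; exists n; split => // x hx.
have hz0 : 0 <= (x + R0) / h by apply: Rmult_le_pos; [lra | apply: Rlt_le; apply: Rinv_0_lt_compat].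
have hz1 : (x + R0) / h < INR n.
  apply: Rle_lt_trans hn1; apply: Rmult_le_compat_r; [apply: Rlt_le; apply: Rinv_0_lt_compat|]; lra.
case: (@floor_nat _ _ hz0 hz1) => i [hi [H1 H2]]; exists i; split => //.
have e : (x + R0) / h * h = x + R0 by field; lra.
split; nra.
Qed.

Lemma Rabs_re_le z : Rabs (cre z) <= Cnorm z.
Proof.
rewrite /Cnorm -(sqrt_pow2 (Rabs (cre z))); last by apply: Rabs_pos.
apply: sqrt_le_1_alt; rewrite -Rsqr_pow2 -Rsqr_abs Rsqr_pow2; nra.
Qed.

Lemma Rabs_im_le z : Rabs (cim z) <= Cnorm z.
Proof.
rewrite /Cnorm -(sqrt_pow2 (Rabs (cim z))); last by apply: Rabs_pos.
apply: sqrt_le_1_alt; rewrite -Rsqr_pow2 -Rsqr_abs Rsqr_pow2; nra.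
Qed.

Lemma Cnorm_lt a b e : 0 < e -> a ^ 2 + b ^ 2 < e ^ 2 -> Cnorm (mkCx a b) < e.
Proof.
move=> he H; rewrite /Cnorm /= -(sqrt_pow2 e); last lra.
apply: sqrt_lt_1_alt; nra.
Qed.

Lemma coord_ex (R0 rho : R) (real : bool) : 0 < rho -> 0 <= R0 ->
  exists (n : nat) (g : nat -> Cx),
    INR n <= (4 * R0 / rho + 1) ^ (if real then 1%N else 2%N) /\
    (real -> forall i, cim (g i) = 0) /\
    forall z, Cnorm z < R0 -> (real -> cim z = 0) ->
      exists i, (i < n)%N /\ Cnorm (Csub z (g i)) < rho.
Proof.
move=> hr hR.
have hh : 0 < rho / 2 by lra.
case: (@axis_ex _ _ hh hR) => n [hn Hc].
have e4 : 2 * R0 / (rho / 2) + 1 = 4 * R0 / rho + 1 by field; lra.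
rewrite e4 in hn.
pose c i := - R0 + INR i * (rho / 2).
case: real.
- exists n, (fun i => mkCx (c i) 0); split; first by rewrite pow_1.
  split => // z hz hre; have hre' := hre isT.
  have hx := Rabs_re_le z; have [h1 h2] := Rabs_def2 _ _ (Rle_lt_trans _ _ _ hx hz).
  case: (Hc (cre z)) => [|i [hi [H1 H2]]]; first lra.
  exists i; split => //; rewrite /Csub /=; apply: Cnorm_lt => //.
  rewrite hre' /c; nra.
- exists (n * n)%N, (fun i => mkCx (c (i %% n)%N) (c (i %/ n)%N)); split.
    rewrite mult_INR /=; have h0 := pos_INR n; nra.
  split => // z hz _.
  have hx := Rabs_re_le z; have [h1 h2] := Rabs_def2 _ _ (Rle_lt_trans _ _ _ hx hz).
  have hy := Rabs_im_le z; have [h3 h4] := Rabs_def2 _ _ (Rle_lt_trans _ _ _ hy hz).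
  case: (Hc (cre z)) => [|i1 [hi1 [H1 H2]]]; first lra.
  case: (Hc (cim z)) => [|i2 [hi2 [H3 H4]]]; first lra.
  have hn0 : (0 < n)%N by lia.
  exists (i2 * n + i1)%N; split; first nia.
  rewrite divnMDl // divn_small // addn0 modnMDl modn_small //.
  rewrite /Csub /=; apply: Cnorm_lt => //; rewrite /c; nra.
Qed.

Lemma cover_ind (r m : nat) (bd Rr rh : nat -> R) :
 (forall j, (j < m)%N -> exists (n : nat) (g : nat -> Cx), INR n <= bd j /\
    ((j < r)%N -> forall i, cim (g i) = 0) /\
    forall z, Cnorm z < Rr j -> ((j < r)%N -> cim z = 0) ->
      exists i, (i < n)%N /\ Cnorm (Csub z (g i)) < rh j) ->
 exists (K : nat) (t0 : nat -> nat -> Cx), INR K <= prodR m bd /\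
   (forall i j, (j < r)%N -> cim (t0 i j) = 0) /\
   forall t, (forall j, (j < m)%N -> Cnorm (t j) < Rr j /\ ((j < r)%N -> cim (t j) = 0)) ->
     exists i, (i < K)%N /\ forall j, (j < m)%N -> Cnorm (Csub (t j) (t0 i j)) < rh j.
Proof.
elim: m => [|m IH] H.
  exists 1%N, (fun _ _ => C0); split; first by simpl; lra.
  split => // t _; exists 0%N; split => // j; lia.
case: IH => [j hj|K [t0 [hK [hre hcov]]]]; first by apply: H; lia.
case: (H m (ltnSn m)) => n [g [hn [hg hgc]]].
exists (K * n)%N, (fun i j => if (j == m)%N then g (i %% n)%N else t0 (i %/ n)%N j).
split.
  rewrite mult_INR /=; apply: Rmult_le_compat => //; try apply: pos_INR.
split.
  move=> i j hj; case: eqP => [e|_]; last by apply: hre.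
  by subst j; apply: hg.
move=> t ht.
case: (hcov t) => [j hj|i0 [hi0 Hi0]]; first by apply: ht; lia.
case: (hgc (t m)) => [||i1 [hi1 Hi1]]; try by case: (ht m (ltnSn m)).
have hn0 : (0 < n)%N by lia.
exists (i0 * n + i1)%N; split; first nia.
move=> j hj; rewrite divnMDl // divn_small // addn0 modnMDl modn_small //.
case: eqP => [e|ne]; first by subst j.
apply: Hi0; lia.
Qed.

Lemma exp_ge1 x : 0 <= x -> 1 <= exp x.
Proof. move=> h; rewrite -exp_0; case: h => h; [apply: Rlt_le; apply: exp_increasing | rewrite h]; lra. Qed.

Lemma key_j (B' B'' eta a D : R) (l kj : nat) (z : Cx * Cx) (sj : ER) :
 0 < B' -> 0 < B'' -> 0 < eta -> 0 < a -> (kj <= l + 1)%N -> 0 <= D <= eta ->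
 ((1 <= kj)%N -> D <= exp (- (INR (kj - 1) * a))) ->
 in_Ishift l kj a sj -> ratio_rel z sj ->
 (4 * (B' * D) / (B'' * eta * exp (- (INR l * a))) + 1) * Rmax (Cnorm z.1) (Cnorm z.2) <=
 ((4 * B' / B'' + 4 * B' / (B'' * eta) + 1) * exp (a / 2)) *
 Rmax (Cnorm z.1 * exp (INR (l + 1) * a / 2)) (Cnorm z.2 * exp (- (INR (l + 1) * a) / 2)) *
 exp (INR l * a / 2).
Proof.
move=> hB1 hB2 he ha hk hD hDk hI hR.
have hp := Cnorm_ge0 z.1; have hq := Cnorm_ge0 z.2.
set p := Cnorm z.1 in hp hR *; set q := Cnorm z.2 in hq hR *.
set u := exp (a / 2); set P := exp (INR l * a / 2).
have hl0 := pos_INR l.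
have hu : 1 <= u by apply: exp_ge1; lra.
have hP : 1 <= P by apply: exp_ge1; nra.
have E1 : exp (INR (l + 1) * a / 2) = P * u.
  by rewrite /P /u -exp_plus plus_INR /=; f_equal; field.
have E2 : exp (- (INR (l + 1) * a) / 2) = / (P * u).
  rewrite -E1 -exp_Ropp; f_equal; field.
have E3 : exp (- (INR l * a)) = / (P * P).
  by rewrite /P -exp_plus -exp_Ropp; f_equal; field.
rewrite E1 E2 E3.
set c0 := 4 * B' / B''; set c1 := 4 * B' / (B'' * eta).
have hc0 : 0 <= c0 by apply: Rmult_le_pos; [lra|apply: Rlt_le; apply: Rinv_0_lt_compat; lra].
have hc1 : 0 <= c1.
  by apply: Rmult_le_pos; [lra|apply: Rlt_le; apply: Rinv_0_lt_compat; nra].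
have Ec : c1 * eta = c0 by rewrite /c1 /c0; field; lra.
have EL : 4 * (B' * D) / (B'' * eta * / (P * P)) = c1 * D * (P * P).
  by rewrite /c1; field; repeat split; nra.
rewrite EL.
set W := Rmax (p * (P * u)) _.
have hW1 : p * (P * u) <= W by apply: Rmax_l.
have hW2 : q * / (P * u) <= W by apply: Rmax_r.
have hPu : 0 < P * u by nra.
have hW2' : q <= W * (P * u).
  have := Rmult_le_compat_r (P * u) _ _ (Rlt_le _ _ hPu) hW2.
  by rewrite Rmult_assoc Rinv_l; [lra | lra].
have hKu : 0 <= (c0 + c1 + 1) * u by nra.
move: hk hDk hI; case: kj => [|k'] hk hDk hI.
-
  have hqp : q <= p.
    move: hI hR; rewrite /in_Ishift /=; case: sj => //= [x hx hxr| _ hxr]; rewrite /q /p hxr; last by apply: Cnorm_ge0.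
    have : exp x <= 1 by rewrite -exp_0; case: hx => hx; [apply: Rlt_le; apply: exp_increasing | rewrite hx]; lra.
    have := Cnorm_ge0 z.1; nra.
  rewrite Rmax_left //.
  have h1 : c1 * D <= c0 by rewrite -Ec; nra.
  have h2 : (c1 * D * (P * P) + 1) * p <= (c0 + c1 + 1) * u * (p * (P * u)) * P.
    have hPP : 1 <= P * P by nra.
    have huu : 1 <= u * u by nra.
    have hA : c1 * D * (P * P) <= c0 * (P * P) by nra.
    have hB : (c0 + 1) * (P * P) <= (c0 + c1 + 1) * (u * u) * (P * P).
      apply: Rmult_le_compat_r; nra.
    nra.
  apply: Rle_trans h2 _.
  apply: Rmult_le_compat_r; [lra|].
  by apply: Rmult_le_compat_l.
- have hk1 : (1 <= k'.+1)%N by [].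
  have hD2 := hDk hk1.
  rewrite subSS subn0 in hD2.
  case hkl: (k'.+1 <= l)%N hI.
  +
    rewrite /in_Ishift /= hkl subSS subn0; case: sj hR => //= x hR [hx1 hx2].
    set A := exp (INR k' * a) in hD2 *.
    have hA1 : 1 <= A by apply: exp_ge1; have := pos_INR k'; nra.
    have hAP : A <= P * P.
      rewrite /A /P -exp_plus; have : INR k' <= INR l by apply: le_INR; lia.
      move=> hkl'; have : INR k' * a <= INR l * a / 2 + INR l * a / 2 by nra.
      case => h; [apply: Rlt_le; apply: exp_increasing | rewrite h]; lra.
    have hex1 : 1 <= exp x by apply: exp_ge1; have := pos_INR k'; nra.
    have hex2 : exp x <= A * (u * u).
      rewrite /A /u -!exp_plus; have : x <= INR k' * a + (a / 2 + a / 2).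
        have eS := S_INR k'; simpl in eS; move: hx2; rewrite eS; lra.
      case => h; [apply: Rlt_le; apply: exp_increasing | rewrite h]; lra.
    have hDA : D * A <= 1.
      have := Rmult_le_compat_r A _ _ (Rle_trans _ _ _ (Rle_0_1) hA1) hD2.
      by rewrite -exp_plus /A Rplus_opp_l exp_0.
    have hR' : q = p * exp x by exact: hR.
    have hqe : p <= q by rewrite hR'; nra.
    rewrite Rmax_right //.
    have h1 : D * exp x <= u * u.
      have : D * exp x <= D * (A * (u * u)) by apply: Rmult_le_compat_l; lra.
      nra.
    have h2 : (c1 * D * (P * P) + 1) * q <= (c1 + 1) * (P * P) * p * (u * u).
      rewrite hR'.
      have := Rmult_le_compat_l (c1 * (P * P) * p) _ _ ltac:(apply: Rmult_le_pos; [apply: Rmult_le_pos; nra|lra]) h1.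
      have : p * exp x <= p * (P * P * (u * u)).
        apply: Rmult_le_compat_l => //; nra.
      nra.
    apply: Rle_trans h2 _.
    have h3 : (c1 + 1) * (P * P) * p * (u * u) <= (c0 + c1 + 1) * u * (p * (P * u)) * P.
      have : (c1 + 1) <= c0 + c1 + 1 by lra.
      move=> hc; have hx : 0 <= (P * P) * p * (u * u) by apply: Rmult_le_pos; [apply: Rmult_le_pos; nra|nra].
      have := Rmult_le_compat_r _ _ _ hx hc; nra.
    apply: Rle_trans h3 _.
    apply: Rmult_le_compat_r; [lra|].
    by apply: Rmult_le_compat_l.
  + move=> hI.
    have ek : k' = l by move: hk hkl => hk hkl; lia.
    subst k'.
    rewrite E3 in hD2.
    have hqe : p <= q.
      move: hI hR; rewrite /in_Ishift /= hkl; case: sj => //= [x hx hxr| _ hxr]; rewrite /q /p hxr; last by apply: Cnorm_ge0.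
      have : 1 <= exp x by apply: exp_ge1; nra.
      have := Cnorm_ge0 z.1; nra.
    rewrite Rmax_right //.
    have h1 : c1 * D * (P * P) <= c1.
      have : D * (P * P) <= 1.
        have := Rmult_le_compat_r (P * P) _ _ ltac:(nra) hD2.
        by rewrite Rinv_l; [lra | nra].
      nra.
    have h2 : (c1 * D * (P * P) + 1) * q <= (c0 + c1 + 1) * q by nra.
    apply: Rle_trans h2 _.
    have h3 : (c0 + c1 + 1) * u * W * P >= (c0 + c1 + 1) * q.
      have := Rmult_le_compat_l ((c0 + c1 + 1)) _ _ ltac:(lra) hW2'.
      nra.
    lra.
Qed.

Theorem lemma5p4 :
  forall (L : fieldExtType rat) (r s : nat) (sigma : nat -> L -> Cx),
  embedding_family r s sigma ->
  forall aa th : nat -> R,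
  (forall j, (j < r)%N -> th j = 0) ->
  (forall j, (j < r + s)%N -> 0 <= th j <= 2 * PI) ->
  (forall j, (j < r + s)%N -> 0 < aa j) ->
  forall B' B'' eta : R, 0 < B' -> 0 < B'' -> 0 < eta ->
  exists C : R, 0 < C /\
  forall (M : R) (N : nat) (V : nat -> Prop) (b l : nat) (k : nat -> nat),
    1 <= M -> (1 <= N)%N ->
    (forall n, V n -> (n < N)%N) ->
    max_interval V b l -> (1 <= b)%N ->
    (forall j, (j < r + s)%N -> (k j <= l + 1)%N) ->
    (exists g : Gelt, in_G r s g /\ in_QJ sigma r s aa th M N V b l k g) ->
    exists (K : nat) (t0 : nat -> nat -> Cx),
      INR K <= C * exp (hmax r s aa / 2 * INR l) /\
      (forall i, (i < K)%N -> real_par r (t0 i)) /\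
      (forall g, in_D r s B' eta aa k g ->
         exists i, (i < K)%N /\
           exists h, in_E r s B'' eta aa l h /\ Geq r s g (gmul (uplus (t0 i)) h)).
Proof.
move=> L r s sigma _ aa th _ _ ha B' B'' eta hB1 hB2 he.
pose Cj j := (4 * B' / B'' + 4 * B' / (B'' * eta) + 1) * exp (aa j / 2).
have hc0 : 0 <= 4 * B' / B'' by apply: Rmult_le_pos; [lra|apply: Rlt_le; apply: Rinv_0_lt_compat; lra].
have hc1 : 0 <= 4 * B' / (B'' * eta).
  by apply: Rmult_le_pos; [lra|apply: Rlt_le; apply: Rinv_0_lt_compat; nra].
have hCj : forall j, 0 < Cj j.
  by move=> j; apply: Rmult_lt_0_compat; [lra | apply: exp_pos].
exists (prodR (r + s) (fun j => Cj j ^ delta r j)); split.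
  by apply: prodR_gt0 => j _; apply: pow_lt.
move=> M N V b l k hM hN hVN [hmax1 [hmax2 hmax3]] hb hk
  [g [_ [hQV [v [hlat [hnz [hnorm hrat]]]]]]].
have hbN : (b - 1 < N)%N.
  have := hVN b (hmax1 b (leqnn b) (leq_addr l b)); lia.
have hht : ht_lt sigma r s (Tpow aa th (b - 1) g) M.
  apply: NNPP => hn; have := proj1 (hQV _ hbN) hn.
  by case: hmax2 => [hb0|hnv]; [lia | ].
have hv : 1 < M * vnorm r s v := hht v hlat hnz.
have hw : vnorm r s (vapow aa th (l + 1) v) <= / M.
  by apply: hnorm; lia.
pose Rr j := B' * Dbound eta aa k j.
pose rh j := B'' * eta * exp (- (INR l * aa j)).
have hDpos : forall j, 0 < Dbound eta aa k j.
  move=> j; rewrite /Dbound; case: (k j == 0)%N; first lra.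
  by apply: Rmin_glb_lt; [lra | apply: exp_pos].
have hrh : forall j, 0 < rh j.
  by move=> j; apply: Rmult_lt_0_compat; [nra | apply: exp_pos].
case: (@cover_ind r (r + s) (fun j => (4 * Rr j / rh j + 1) ^ delta r j) Rr rh)
  => [j hj|K [t0 [hK [hre hcov]]]].
  have hR0 : 0 <= Rr j by apply: Rlt_le; apply: Rmult_lt_0_compat.
  case: (@coord_ex (Rr j) (rh j) (j < r)%N (hrh j) hR0) => n [g0 [h1 [h2 h3]]].
  by exists n, g0; split; [exact: h1 | split].
exists K, t0; split; [|split].
-
  pose C := prodR (r + s) (fun j => Cj j ^ delta r j).
  pose E := exp (hmax r s aa / 2 * INR l).
  set w := vapow aa th (l + 1) v in hw.
  have Eexp : E = prodR (r + s) (fun j => exp (INR l * aa j / 2) ^ delta r j).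
    rewrite (@prodR_ext _ _ (fun j => exp (INR (delta r j) * (INR l * aa j / 2)))); last first.
      by move=> j _; rewrite exp_pow.
    rewrite prodR_exp /E; f_equal.
    have -> : hmax r s aa / 2 * INR l = hmax r s aa * (INR l / 2) by field.
    rewrite /hmax sumR_scal; apply: sumR_ext => j hj.
    rewrite Rabs_pos_eq; last by apply: Rlt_le; apply: ha.
    field.
  have key : prodR (r + s) (fun j => (4 * Rr j / rh j + 1) ^ delta r j) * vnorm r s v
             <= C * E * vnorm r s w.
    rewrite /vnorm Eexp /C -!prodR_mul; apply: prodR_le => j hj.
    have hdj := hDpos j.
    have hrj := hrh j.
    have hA : 0 <= 4 * Rr j / rh j + 1.
      have : 0 <= Rr j / rh j by apply: Rmult_le_pos; [apply: Rlt_le; apply: Rmult_lt_0_compat|apply: Rlt_le; apply: Rinv_0_lt_compat].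
      lra.
    have hcv : 0 <= compnorm (v j).
      by rewrite /compnorm; apply: Rle_trans (Rmax_l _ _); apply: Cnorm_ge0.
    split.
      by apply: Rmult_le_pos; apply: pow_le.
    rewrite -!Rpow_mult_distr; apply: pow_incr; split; first by apply: Rmult_le_pos.
    case: (hrat j hj) => sj [hI hR].
    have hD1 : 0 <= Dbound eta aa k j <= eta.
      split; first lra.
      by rewrite /Dbound; case: (k j == 0)%N; [lra | apply: Rmin_l].
    have hD2 : (1 <= k j)%N -> Dbound eta aa k j <= exp (- (INR (k j - 1) * aa j)).
      move=> hk1; rewrite /Dbound; case: eqP => [e|_]; first by rewrite e in hk1.
      exact: Rmin_r.
    have := @key_j _ _ _ _ _ _ _ _ _ hB1 hB2 he (ha j hj) (hk j hj) hD1 hD2 hI hR.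
    have [n1 n2] := vapow_norm aa th (l + 1) v j.
    rewrite /w /compnorm n1 n2 /Rr /rh => H.
    apply: Rle_trans H _; rewrite /Cj; apply: Req_le; ring.
  have hvpos : 0 < vnorm r s v.
    case: (Rle_lt_dec (vnorm r s v) 0) => // h; nra.
  have hMv : / M < vnorm r s v.
    have hM0 : 0 < M by lra.
    have := Rmult_lt_compat_l (/ M) _ _ (Rinv_0_lt_compat _ hM0) hv.
    by rewrite -Rmult_assoc Rinv_l ?Rmult_1_l ?Rmult_1_r; lra.
  have hCE : 0 <= C * E.
    apply: Rmult_le_pos; [apply: Rlt_le; apply: prodR_gt0 => j _; apply: pow_lt; apply: hCj | apply: Rlt_le; apply: exp_pos].
  apply: (@Rmult_le_reg_r (vnorm r s v) _ _ hvpos).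
  apply: Rle_trans (Rmult_le_compat_r _ _ _ (Rlt_le _ _ hvpos) hK) _.
  apply: Rle_trans key _.
  apply: Rmult_le_compat_l => //; lra.
- by move=> i _ j hj; apply: hre.
- move=> g' [t [hrt [ht hG]]].
  case: (hcov t) => [j hj|i [hi Hi]]; first by split; [apply: ht | apply: hrt].
  exists i; split => //.
  exists (uplus (fun j => Csub (t j) (t0 i j))); split.
    exists (fun j => Csub (t j) (t0 i j)); split.
      by move=> j hj; rewrite /Csub /= hrt // hre //; lra.
    by split => // j hj; apply: Hi; lia.
  move=> j hj; rewrite hG //.
  rewrite /uplus /gmul /M2mul.
  case: (t j) => a1 a2; case: (t0 i j) => b1 b2.
  rewrite /Cadd /Cmul /Csub /Defs.C1 /C0 /=; f_equal; f_equal; ring.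
Qed.
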